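(* There is an interpretation of $L(I)$ in $W(I)$, for which the co-ordinate map from the set of finite unions of closed intervals of $I$ to (finite subsets of $I$)$^2$ is given by $A \mapsto (l(A),r(A))$, the pair consisting of the set of left endpoints and the set of right endpoints of $A$.
   Context: Let $I$ be a dense linear order with a left endpoint $0$ and no right endpoint. $W(I)$ is the structure in the signature $\{\cup,\cap,\bot,\{0\},\min,\max,\mathrm{ips}\}$ whose universe is the collection of finite subsets of $I$, with $\cup,\cap$ union and intersection, $\bot$ the empty set, the constant $\{0\}$ interpreted as the singleton of the left endpoint, $\min$ and $\max$ sending a nonempty finite set to the singleton of its minimum (resp. maximum) and fixing $\emptyset$, and $\mathrm{ips}$ the binary function $\mathrm{ips}(A,B)=\{i\in A : \text{the successor of } i \text{ in } A \text{ (in the induced order) exists and lies in } B\}$. $L(I)$ is the structure in the signature $\{\cup,\cap,\bot,\{0\},\min,\max,l,r\}$ whose universe is the collection of finite unions of closed intervals of $I$ (closed intervals being sets of the form $[i,j]$, $[i,+\infty)$, $(-\infty,j]$), with $\cup,\cap$ union and intersection, $\bot$ the empty set, $\{0\}$ the singleton of the left endpoint, $\min$ and $\max$ sending a set to the singleton of its minimum (resp. maximum), with $\min(\emptyset)=\max(\emptyset)=\emptyset$ and $\max(A)=\emptyset$ for unbounded $A$, and $l$, $r$ sending a set to the set of its left (resp. right) endpoints. *)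

(* Defs.v *)
From HB Require Import structures.
From mathcomp Require Import all_boot all_order.
From mathcomp Require Import finmap.
From Stdlib Require List.
Set Implicit Arguments. Unset Strict Implicit. Unset Printing Implicit Defensive.
Import Order.TTheory.

Inductive wterm : Type :=
| WVar  of nat
| WUnion of wterm & wterm
| WInter of wterm & wterm
| WBot
| WZero
| WMin of wterm
| WMax of wterm
| WIps of wterm & wterm.

Inductive wformula : Type :=
| WEq  of wterm & wterm
| WNot of wformula
| WAnd of wformula & wformula
| WOr  of wformula & wformula
| WImp of wformula & wformula
| WEx  of nat & wformula
| WAll of nat & wformula.

Section Structures.
Local Open Scope order_scope.
Local Open Scope fset_scope.

Context {d : Order.disp_t} {I : orderType d} (z : I).

Definition Wmin (A : {fset I}) : {fset I} :=
  [fset i in A | all (fun k => i <= k) A].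
Definition Wmax (A : {fset I}) : {fset I} :=
  [fset i in A | all (fun k => k <= i) A].
(* i is in ips A B iff i is in A, the successor j of i in A exists,
   and j lies in B. *)
Definition Wips (A B : {fset I}) : {fset I} :=
  [fset i in A | has (fun j => [&& i < j, j \in B &
                     all (fun k => ~~ ((i < k) && (k < j))) A]) A].

Fixpoint weval (e : nat -> {fset I}) (t : wterm) : {fset I} :=
  match t with
  | WVar n => e n
  | WUnion t1 t2 => weval e t1 `|` weval e t2
  | WInter t1 t2 => weval e t1 `&` weval e t2
  | WBot => fset0
  | WZero => [fset z]
  | WMin t1 => Wmin (weval e t1)
  | WMax t1 => Wmax (weval e t1)
  | WIps t1 t2 => Wips (weval e t1) (weval e t2)
  end.

Definition upd (e : nat -> {fset I}) (n : nat) (X : {fset I}) : nat -> {fset I} :=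
  fun m => if m == n then X else e m.

Fixpoint wholds (e : nat -> {fset I}) (f : wformula) : Prop :=
  match f with
  | WEq t1 t2 => weval e t1 = weval e t2
  | WNot f1 => ~ wholds e f1
  | WAnd f1 f2 => wholds e f1 /\ wholds e f2
  | WOr f1 f2 => wholds e f1 \/ wholds e f2
  | WImp f1 f2 => wholds e f1 -> wholds e f2
  | WEx n f1 => exists X, wholds (upd e n X) f1
  | WAll n f1 => forall X, wholds (upd e n X) f1
  end.

Definition env_of (s : seq {fset I}) : nat -> {fset I} := fun n => nth fset0 s n.

(* Subsets of I are predicates I -> Prop, compared extensionally.     *)
Definition seteq (A B : I -> Prop) : Prop := forall x, A x <-> B x.

Definition is_cint (C : I -> Prop) : Prop :=
  (exists i j, seteq C (fun x => i <= x /\ x <= j)) \/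
  (exists i, seteq C (fun x => i <= x)) \/
  (exists j, seteq C (fun x => x <= j)).

Definition LI (A : I -> Prop) : Prop :=
  exists s : seq (I -> Prop),
    (forall C, List.In C s -> is_cint C) /\
    seteq A (fun x => exists C, List.In C s /\ C x).

Definition Lunion (A B : I -> Prop) : I -> Prop := fun x => A x \/ B x.
Definition Linter (A B : I -> Prop) : I -> Prop := fun x => A x /\ B x.
Definition Lbot : I -> Prop := fun _ => False.
Definition Lzero : I -> Prop := fun x => x = z.
Definition Lmin (A : I -> Prop) : I -> Prop := fun x => A x /\ forall y, A y -> x <= y.
Definition Lmax (A : I -> Prop) : I -> Prop := fun x => A x /\ forall y, A y -> y <= x.
Definition Ll (A : I -> Prop) : I -> Prop :=
  fun x => A x /\ (x = z \/ exists y, y < x /\ forall w, y < w -> w < x -> ~ A w).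
Definition Lr (A : I -> Prop) : I -> Prop :=
  fun x => A x /\ exists y, x < y /\ forall w, x < w -> w < y -> ~ A w.

Definition coord (A : I -> Prop) (X Y : {fset I}) : Prop :=
  (forall x, x \in X <-> Ll A x) /\ (forall x, x \in Y <-> Lr A x).

Definition defines_domain (phi : wformula) : Prop :=
  forall X Y : {fset I},
    wholds (env_of [:: X; Y]) phi <-> exists A, LI A /\ coord A X Y.

Definition defines_eq (phi : wformula) : Prop :=
  forall A B XA YA XB YB, LI A -> LI B -> coord A XA YA -> coord B XB YB ->
    (wholds (env_of [:: XA; YA; XB; YB]) phi <-> seteq A B).

Definition defines_const (c : I -> Prop) (phi : wformula) : Prop :=
  forall C XC YC, LI C -> coord C XC YC ->
    (wholds (env_of [:: XC; YC]) phi <-> seteq c C).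

Definition defines_fun1 (F : (I -> Prop) -> (I -> Prop)) (phi : wformula) : Prop :=
  forall A C XA YA XC YC, LI A -> LI C -> coord A XA YA -> coord C XC YC ->
    (wholds (env_of [:: XA; YA; XC; YC]) phi <-> seteq (F A) C).

Definition defines_fun2 (F : (I -> Prop) -> (I -> Prop) -> (I -> Prop))
    (phi : wformula) : Prop :=
  forall A B C XA YA XB YB XC YC, LI A -> LI B -> LI C ->
    coord A XA YA -> coord B XB YB -> coord C XC YC ->
    (wholds (env_of [:: XA; YA; XB; YB; XC; YC]) phi <-> seteq (F A B) C).

Definition interpretation_L_in_W_via_lr : Prop :=
  (forall A, LI A -> exists X Y, coord A X Y) /\
  exists phiD phiEq phiU phiI phiB phiZ phiMin phiMax phil phir : wformula,
    defines_domain phiD /\ defines_eq phiEq /\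
    defines_fun2 Lunion phiU /\ defines_fun2 Linter phiI /\
    defines_const Lbot phiB /\ defines_const Lzero phiZ /\
    defines_fun1 Lmin phiMin /\ defines_fun1 Lmax phiMax /\
    defines_fun1 Ll phil /\ defines_fun1 Lr phir.

End Structures.

(* Main.v *)
Require Import Defs.
From mathcomp Require Import all_boot all_order finmap.
From Stdlib Require Import Classical ClassicalEpsilon.
Import Order.TTheory.
Local Open Scope order_scope.
Local Open Scope fset_scope.
Section S.
Context {d : Order.disp_t} {I : orderType d}.
Lemma Wmin_in (A : {fset I}) x : (x \in Wmin A) = (x \in A) && all (fun k => x <= k) A.
Proof. by rewrite /Wmin inE. Qed.
Lemma sing_iff (X : {fset I}) : (~ X = fset0 /\ Wmin X = X) <-> exists a, X = [fset a].
Proof.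
split.
- case=> ne e.
  have [a aX] : exists a, a \in X.
    case: (fset_0Vmem X) => [E|[a aX]]; last by exists a.
    by case: ne.
  exists a; apply/fsetP => b; rewrite inE.
  apply/idP/eqP => [bX|->//].
  have : a \in Wmin X by rewrite e.
  have : b \in Wmin X by rewrite e.
  rewrite !Wmin_in => /andP[_ /allP Hb] /andP[_ /allP Ha].
  by apply/eqP; rewrite eq_le Hb // Ha.
- case=> a ->; split.
  + move/fsetP=> /(_ a); by rewrite !inE eqxx.
  + apply/fsetP=> b; rewrite Wmin_in !inE; case: eqP => //= ->.
    apply/allP=> k; rewrite inE => /eqP->; exact: lexx.
Qed.
Lemma in_iff (a : I) X : [fset a] `&` X = [fset a] <-> a \in X.
Proof.
split.
- move/fsetP=> /(_ a); by rewrite !inE eqxx /= => ->.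
- move=> aX; apply/fsetP=> b; rewrite !inE; case: eqP => //= ->; by rewrite aX.
Qed.
Lemma le_iff (a b : I) : Wmin ([fset a] `|` [fset b]) = [fset a] <-> a <= b.
Proof.
split.
- move/fsetP=> /(_ a); rewrite Wmin_in !inE eqxx /= => /allP; apply; by rewrite !inE eqxx orbT.
- move=> ab; apply/fsetP=> c; rewrite Wmin_in !inE.
  case: (c =P a) => [->|ca] /=.
  + apply/allP=> k; rewrite !inE => /orP[]/eqP->//.
  + case: (c =P b) => [cb|] //=.
    apply/negP=> /allP /(_ a); rewrite !inE eqxx /= => /(_ isT) ca'.
    apply: ca; apply/eqP; rewrite eq_le ca' cb ab.
    all: done.
Qed.
Lemma s1_iff (a b : I) : [fset a] = [fset b] <-> a = b.
Proof.
split=> [|->//]. move/fsetP=> /(_ a); rewrite !inE eqxx => /esym/eqP; done.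
Qed.

Inductive pform : Type :=
| PIn of nat & nat | PLe of nat & nat | PLt of nat & nat | PEq of nat & nat
| PZ of nat | PNot of pform | PAnd of pform & pform | POr of pform & pform
| PImp of pform & pform | PAll of nat & pform | PEx of nat & pform.

Definition sing (n : nat) : wformula :=
  WAnd (WNot (WEq (WVar n) WBot)) (WEq (WMin (WVar n)) (WVar n)).
Definition wle n m := WEq (WMin (WUnion (WVar n) (WVar m))) (WVar n).

Fixpoint compile (f : pform) : wformula :=
  match f with
  | PIn p k => WEq (WInter (WVar (6+p)) (WVar (k %% 6))) (WVar (6+p))
  | PLe p q => wle (6+p) (6+q)
  | PLt p q => WAnd (wle (6+p) (6+q)) (WNot (WEq (WVar (6+p)) (WVar (6+q))))
  | PEq p q => WEq (WVar (6+p)) (WVar (6+q))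
  | PZ p => WEq (WVar (6+p)) WZero
  | PNot f => WNot (compile f)
  | PAnd f g => WAnd (compile f) (compile g)
  | POr f g => WOr (compile f) (compile g)
  | PImp f g => WImp (compile f) (compile g)
  | PAll p f => WAll (6+p) (WImp (sing (6+p)) (compile f))
  | PEx p f => WEx (6+p) (WAnd (sing (6+p)) (compile f))
  end.

Fixpoint wf (P : nat -> bool) (f : pform) : bool :=
  match f with
  | PIn p k => P p
  | PLe p q | PLt p q | PEq p q => P p && P q
  | PZ p => P p
  | PNot f => wf P f
  | PAnd f g | POr f g | PImp f g => wf P f && wf P g
  | PAll p f | PEx p f => wf (fun q => (q == p) || P q) f
  end.

Definition vupd (v : nat -> I) p a := fun q => if q == p then a else v q.

Section Sem.
Variable z : I.
Variable S : nat -> {fset I}.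
Fixpoint psem (v : nat -> I) (f : pform) : Prop :=
  match f with
  | PIn p k => v p \in S (k %% 6)
  | PLe p q => v p <= v q
  | PLt p q => v p < v q
  | PEq p q => v p = v q
  | PZ p => v p = z
  | PNot f => ~ psem v f
  | PAnd f g => psem v f /\ psem v g
  | POr f g => psem v f \/ psem v g
  | PImp f g => psem v f -> psem v g
  | PAll p f => forall a, psem (vupd v p a) f
  | PEx p f => exists a, psem (vupd v p a) f
  end.

Lemma compileP f : forall (P : nat -> bool) E v, wf P f ->
  (forall k, k < 6 -> E k = S k)%N -> (forall p, P p -> E (6+p)%N = [fset v p]) ->
  (wholds z E (compile f) <-> psem v f).
Proof.
elim: f => /=.
- move=> p k P E v Pp HS Hp.
  rewrite (Hp _ Pp) HS ?ltn_mod //. exact: in_iff.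
- move=> p q P E v /andP[Pp Pq] HS Hp.
  rewrite (Hp _ Pp) (Hp _ Pq). exact: le_iff.
- move=> p q P E v /andP[Pp Pq] HS Hp.
  rewrite (Hp _ Pp) (Hp _ Pq) le_iff s1_iff lt_neqAle.
  split=> [[-> /eqP ->]|/andP[/eqP ne ->]] //.
- move=> p q P E v /andP[Pp Pq] HS Hp.
  rewrite (Hp _ Pp) (Hp _ Pq). exact: s1_iff.
- move=> p P E v Pp HS Hp. rewrite (Hp _ Pp). exact: s1_iff.
- move=> f IH P E v H HS Hp. by rewrite (IH P E v).
- move=> f IHf g IHg P E v /andP[H1 H2] HS Hp. by rewrite (IHf P E v) // (IHg P E v).
- move=> f IHf g IHg P E v /andP[H1 H2] HS Hp. by rewrite (IHf P E v) // (IHg P E v).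
- move=> f IHf g IHg P E v /andP[H1 H2] HS Hp. by rewrite (IHf P E v) // (IHg P E v).
- move=> p f IH P E v H HS Hp.
  have key : forall a, wholds z (upd E (6+p) [fset a]) (compile f) <-> psem (vupd v p a) f.
    move=> a; apply: (IH _ _ _ H).
    + move=> k kl; rewrite /upd; case: eqP => [e|_]; last exact: HS.
      by move: kl; rewrite e ltnNge leq_addr.
    + move=> q; rewrite /upd /vupd eqn_add2l; case: eqP => // _ /= Pq; exact: Hp.
  split.
  + move=> Hw a; apply/key; apply: Hw.
    apply/sing_iff; exists a; by rewrite /upd eqxx.
  + move=> Hs X; move/sing_iff; rewrite /= /upd eqxx => -[a ->]; by apply/key.
- move=> p f IH P E v H HS Hp.
  have key : forall a, wholds z (upd E (6+p) [fset a]) (compile f) <-> psem (vupd v p a) f.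
    move=> a; apply: (IH _ _ _ H).
    + move=> k kl; rewrite /upd; case: eqP => [e|_]; last exact: HS.
      by move: kl; rewrite e ltnNge leq_addr.
    + move=> q; rewrite /upd /vupd eqn_add2l; case: eqP => // _ /= Pq; exact: Hp.
  split.
  + case=> X [] /sing_iff; rewrite /= /upd eqxx => -[a eX].
    rewrite -/(upd E (6+p) X) eX => Hf. exists a; exact/key.
  + case=> a /key Hf; exists [fset a]; split => //.
    apply/sing_iff; exists a; by rewrite /upd eqxx.
Qed.
End Sem.
Lemma max_ex (L : seq I) (P : I -> Prop) : (exists c, c \in L /\ P c) ->
  exists c, [/\ c \in L, P c & forall c', c' \in L -> P c' -> c' <= c].
Proof.
elim: L => [|a L IH] [c [cin Pc]] //.
case: (classic (exists c, c \in L /\ P c)) => [/IH [m [mL Pm Hm]]|no].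
- case: (classic (P a)) => Pa.
  + case: (leP a m) => am.
    * exists m; split; [by rewrite inE mL orbT | done |].
      move=> c'; rewrite inE => /orP[/eqP->//|]; exact: Hm.
    * exists a; split; [by rewrite inE eqxx | done |].
      move=> c'; rewrite inE => /orP[/eqP->//|c'L Pc']; apply: le_trans (ltW am); exact: Hm.
  + exists m; split; [by rewrite inE mL orbT | done |].
    move=> c'; rewrite inE => /orP[/eqP->//|]; exact: Hm.
- have ca : c = a.
    move: cin; rewrite inE => /orP[/eqP//|cL]; case: no; by exists c.
  subst c; exists a; split; [by rewrite inE eqxx | done |].
  move=> c'; rewrite inE => /orP[/eqP->//|c'L Pc']; case: no; by exists c'.
Qed.

Lemma min_ex (L : seq I) (P : I -> Prop) : (exists c, c \in L /\ P c) ->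
  exists c, [/\ c \in L, P c & forall c', c' \in L -> P c' -> c <= c'].
Proof.
elim: L => [|a L IH] [c [cin Pc]] //.
case: (classic (exists c, c \in L /\ P c)) => [/IH [m [mL Pm Hm]]|no].
- case: (classic (P a)) => Pa.
  + case: (leP m a) => am.
    * exists m; split; [by rewrite inE mL orbT | done |].
      move=> c'; rewrite inE => /orP[/eqP->//|]; exact: Hm.
    * exists a; split; [by rewrite inE eqxx | done |].
      move=> c'; rewrite inE => /orP[/eqP->//|c'L Pc']; apply: le_trans (ltW am) _; exact: Hm.
  + exists m; split; [by rewrite inE mL orbT | done |].
    move=> c'; rewrite inE => /orP[/eqP->//|]; exact: Hm.
- have ca : c = a.
    move: cin; rewrite inE => /orP[/eqP//|cL]; case: no; by exists c.
  subst c; exists a; split; [by rewrite inE eqxx | done |].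
  move=> c'; rewrite inE => /orP[/eqP->//|c'L Pc']; case: no; by exists c'.
Qed.

Definition oleq (x : I) (oj : option I) := if oj is Some j then is_true (x <= j) else True.
Definition ival (p : I * option I) := fun x => p.1 <= x /\ oleq x p.2.
Definition Aof (L : seq (I * option I)) x := exists2 p, p \in L & ival p x.

Definition membS (X Y : {fset I}) (x : I) : Prop :=
  exists a, a \in X /\ (a <= x /\ forall b, b \in Y -> ~ (a <= b /\ b < x)).

Section Main.
Variable z : I.
Hypothesis z_least : forall x : I, z <= x.
Hypothesis I_dense : forall x y : I, x < y -> exists w, x < w < y.

Definition EL (L : seq (I * option I)) := z :: (map fst L ++ pmap snd L).

Lemma EL1 L p : p \in L -> p.1 \in EL L.
Proof. move=> pL; by rewrite inE mem_cat map_f ?orbT. Qed.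
Lemma EL2 L p j : p \in L -> p.2 = Some j -> j \in EL L.
Proof. move=> pL e; by rewrite inE mem_cat mem_pmap -e map_f ?orbT. Qed.
Arguments EL1 {L p}. Arguments EL2 {L p j}.

Lemma memb_correct L (X Y : {fset I}) :
  (forall x, x \in X <-> Ll z (Aof L) x) -> (forall x, x \in Y <-> Lr (Aof L) x) ->
  forall x, Aof L x <-> membS X Y x.
Proof.
move=> HX HY x; split.
- case=> p0 p0L [p0x p0j].
  pose Pc c := c <= x /\ forall w, c <= w -> w <= x -> Aof L w.
  have [a [aL [ax Pa] amin]] : exists a, [/\ a \in map fst L, Pc a &
      forall c', c' \in map fst L -> Pc c' -> a <= c'].
    apply: min_ex; exists p0.1; split; first exact: map_f.
    split=> // w p0w wx; exists p0 => //; split => //.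
    move: p0j; rewrite /oleq; case: p0.2 => // j xj; exact: le_trans wx xj.
  exists a; split; last split => //.
  + apply/HX; split; first exact: Pa.
    case: (classic (a = z)) => [->|az]; first by left.
    right.
    have za : z < a by rewrite lt_neqAle z_least andbT; apply/eqP => e; apply: az.
    have [y [yE ya ymax]] : exists y, [/\ y \in EL L, y < a &
        forall c', c' \in EL L -> c' < a -> c' <= y].
      apply: max_ex; exists z; split => //; by rewrite inE eqxx.
    exists y; split => // w yw wa [p pL [p1w wj]].
    have p1y : p.1 <= y by apply: ymax; [exact: EL1 | exact: le_lt_trans wa].
    have Pp : Pc p.1.
      split; first exact: le_trans p1w (le_trans (ltW wa) ax).
      move=> w' p1w' w'x; case: (leP a w') => aw'; first exact: Pa.
      exists p => //; split => //.
      move: wj; rewrite /oleq; case e: p.2 => [j|] // wj.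
      case: (leP a j) => aj; first exact: le_trans (ltW aw') aj.
      have := ymax j (EL2 pL e) aj => jy.
      by have := lt_le_trans (le_lt_trans jy yw) wj; rewrite ltxx.
    have := amin _ (map_f fst pL) Pp => ap1.
    by have := le_lt_trans (le_trans ap1 p1y) ya; rewrite ltxx.
  + move=> b /HY [_ [y' [by' gap]]] [ab bx].
    have [w [bw wlt]] : exists w, [/\ b < w, w < y' & w < x].
      case: (leP y' x) => yx.
      * have [w /andP[bw wy]] := I_dense _ _ by'; exists w; split => //; exact: lt_le_trans wy yx.
      * have [w /andP[bw wx]] := I_dense _ _ bx; exists w; split => //; exact: lt_trans wx yx.
    move: wlt => [wy wx]; apply: (gap w bw wy).
    apply: Pa; [exact: le_trans ab (ltW bw) | exact: ltW].
- case=> a [aX [ax noY]].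
  apply: NNPP => nAx.
  have Aa : Aof L a by have [] := (HX a).1 aX.
  pose Pc c := [/\ a <= c, c <= x & forall w, a <= w -> w <= c -> Aof L w].
  have [b [bR [ab bx Pb] bmax]] : exists b, [/\ b \in a :: pmap snd L, Pc b &
      forall c', c' \in a :: pmap snd L -> Pc c' -> c' <= b].
    apply: max_ex; exists a; split; first by rewrite inE eqxx.
    split=> // w aw wa; by have -> : w = a by apply/eqP; rewrite eq_le wa aw.
  have bltx : b < x.
    rewrite lt_neqAle bx andbT; apply/eqP => e; apply: nAx; rewrite -e; exact: Pb.
  apply: (noY b); last by split.
  apply/HY; split; first exact: Pb.
  have [y [yE by_ ymin]] : exists y, [/\ y \in x :: EL L, b < y &
      forall c', c' \in x :: EL L -> b < c' -> y <= c'].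
    apply: min_ex; exists x; split => //; by rewrite inE eqxx.
  have yx : y <= x by apply: ymin => //; rewrite inE eqxx.
  exists y; split => // w bw wy [p pL [p1w wj]].
  have p1b : p.1 <= b.
    rewrite leNgt; apply/negP => bp1.
    have yp1 : y <= p.1 by apply: ymin bp1; rewrite inE (EL1 pL) orbT.
    by have := lt_le_trans wy (le_trans yp1 p1w); rewrite ltxx.
  move: wj; rewrite /oleq; case e: p.2 => [j|] wj; last first.
    apply: nAx; exists p => //; split; first exact: le_trans p1b bx.
    by rewrite /oleq e.
  have bj : b < j := lt_le_trans bw wj.
  case: (leP x j) => xj.
    apply: nAx; exists p => //; split; first exact: le_trans p1b bx.
    by rewrite /oleq e.
  have Pj : Pc j.
    split; [exact: le_trans ab (ltW bj) | exact: ltW |].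
    move=> w' aw' w'j; case: (leP w' b) => w'b; first exact: Pb.
    exists p => //; split; first exact: le_trans p1b (ltW w'b).
    by rewrite /oleq e.
  have jR : j \in a :: pmap snd L by rewrite inE mem_pmap -e map_f ?orbT.
  by have := lt_le_trans bj (bmax _ jR Pj); rewrite ltxx.
Qed.

Lemma LI_Aof L : LI (Aof L).
Proof.
elim: L => [|p L [s [Hs HA]]].
- exists [::]; split => // x; split; [by case | by case=> C []].
- exists (ival p :: s); split.
  + move=> C /= [<-|]; last exact: Hs.
    rewrite /ival /oleq; case: p.2 => [j|].
    * left; exists p.1, j => x; split; by case.
    * right; left; exists p.1 => x; split; [by case | by []].
  + move=> x; split.
    * case=> q; rewrite inE => /orP[/eqP->|qL] Hq.
      - by exists (ival p); split => //; left.
      - have [C [CS Cx]] : exists C, List.In C s /\ C x by apply/HA; exists q.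
        exists C; split => //; by right.
    * case=> C [[<-|CS] Cx].
      - by exists p; rewrite ?inE ?eqxx.
      - have [q qL Hq] : Aof L x by apply/HA; exists C.
        by exists q; rewrite // inE qL orbT.
Qed.

Lemma LI_Aof_ex A : LI A -> exists L, seteq A (Aof L).
Proof.
case=> s [Hs HA].
suff [L HL] : exists L, seteq (fun x => exists C, List.In C s /\ C x) (Aof L).
  exists L => x; rewrite HA; exact: HL.
elim: s Hs {HA} => [|C s IH] Hs.
- exists [::] => x; split; [by case=> C [] | by case].
- have [L HL] := IH (fun C' H => Hs C' (or_intror H)).
  have [p Hp] : exists p, seteq C (ival p).
    case: (Hs C (or_introl erefl)) => [[i [j H]]|[[i H]|[j H]]].
    + by exists (i, Some j).
    + by exists (i, None) => x; rewrite H /ival /=; split => // -[].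
    + exists (z, Some j) => x; rewrite H /ival /=; split => [->|[]//].
      by rewrite z_least.
  exists (p :: L) => x; split.
  + case=> C' [/= [<-|C's] C'x].
    * by exists p; [rewrite inE eqxx | apply/Hp].
    * have [q qL Hq] : Aof L x by apply/HL; exists C'.
      by exists q; rewrite // inE qL orbT.
  + case=> q; rewrite inE => /orP[/eqP->|qL] Hq.
    * by exists C; split; [left | apply/Hp].
    * have [C' [C's C'x]] : exists C', List.In C' s /\ C' x by apply/HL; exists q.
      exists C'; split => //; by right.
Qed.

Lemma memb_LI (X Y : {fset I}) : LI (membS X Y).
Proof.
pose Q a x := a <= x /\ forall b, b \in Y -> ~ (a <= b /\ b < x).
have step1 : forall a, exists oj, forall x, Q a x <-> ival (a, oj) x.
  move=> a; case: (classic (exists b, b \in enum_fset Y /\ a <= b)) => [H|no].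
  - have [m [mY am mmin]] := min_ex (enum_fset Y) (fun b => is_true (a <= b)) H.
    exists (Some m) => x; rewrite /Q /ival /oleq /=; split.
    + case=> ax H'; split => //; rewrite leNgt; apply/negP => mx; exact: (H' m mY).
    + case=> ax xm; split => // b bY [ab bx].
      have := le_lt_trans (le_trans xm (mmin b bY ab)) bx; by rewrite ltxx.
  - exists None => x; rewrite /Q /ival /oleq /=; split; first by case.
    case=> ax _; split => // b bY [ab _]; apply: no; by exists b.
have step2 : forall xs : seq I, exists L, forall x,
    (exists a, a \in xs /\ Q a x) <-> Aof L x.
  elim=> [|a xs [L HL]].
  - exists [::] => x; split; [by case=> ? [] | by case].
  - have [oj Hoj] := step1 a.
    exists ((a, oj) :: L) => x; split.
    + case=> b; rewrite inE => -[/orP[/eqP->|bxs] Qb].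
      * by exists (a, oj); [rewrite inE eqxx | apply/Hoj].
      * have [q qL Hq] : Aof L x by apply/HL; exists b.
        by exists q; rewrite // inE qL orbT.
    + case=> q; rewrite inE => /orP[/eqP->|qL] Hq.
      * by exists a; rewrite inE eqxx; split => //; apply/Hoj.
      * have [b [bxs Qb]] : exists b, b \in xs /\ Q b x by apply/HL; exists q.
        by exists b; rewrite inE bxs orbT.
have [L HL] := step2 (enum_fset X).
have [s [Hs HA]] := LI_Aof L.
exists s; split => // x; rewrite -HA -HL; done.
Qed.

Lemma Ll_ext (A B : I -> Prop) : seteq A B -> seteq (Ll z A) (Ll z B).
Proof.
move=> H x; split; case=> Ax R; (split; [by apply/H | ]).
all: case: R => [e|[y [yx G]]]; [by left | right; exists y; split => // w yw wx /H; exact: G yw wx].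
Qed.
Lemma Lr_ext (A B : I -> Prop) : seteq A B -> seteq (Lr A) (Lr B).
Proof.
move=> H x; split; case=> Ax R; (split; [by apply/H | ]).
all: case: R => [y [yx G]]; exists y; split => // w yw wx /H; exact: G yw wx.
Qed.
Lemma Lmin_ext (A B : I -> Prop) : seteq A B -> seteq (Lmin A) (Lmin B).
Proof.
move=> H x; split; case=> Ax G; (split; [by apply/H | ]) => y /H; exact: G.
Qed.
Lemma Lmax_ext (A B : I -> Prop) : seteq A B -> seteq (Lmax A) (Lmax B).
Proof.
move=> H x; split; case=> Ax G; (split; [by apply/H | ]) => y /H; exact: G.
Qed.

Lemma memb_correct' A X Y : LI A -> coord z A X Y -> seteq A (membS X Y).
Proof.
move=> /LI_Aof_ex [L HL] [HX HY] x.
rewrite HL; apply: memb_correct.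
- move=> y; split => [/(HX y)/(Ll_ext _ _ HL y)|/(Ll_ext _ _ HL y)/(HX y)]//.
- move=> y; split => [/(HY y)/(Lr_ext _ _ HL y)|/(Lr_ext _ _ HL y)/(HY y)]//.
Qed.

Definition dec (P : Prop) : bool := if excluded_middle_informative P then true else false.
Lemma decP P : dec P <-> P.
Proof. rewrite /dec; case: excluded_middle_informative => //. Qed.

Lemma coord_ex A : LI A -> exists X Y, coord z A X Y.
Proof.
move=> LA; have [L HL] := LI_Aof_ex _ LA.
have lE : forall x, Ll z A x -> x \in EL L.
  move=> x /(Ll_ext _ _ HL) [[p pL [p1x xj]] [->|[y [yx gap]]]]; first by rewrite inE eqxx.
  case: (eqVneq p.1 x) => [<-|ne]; first exact: EL1 pL.
  have p1x' : p.1 < x by rewrite lt_neqAle ne p1x.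
  exfalso.
  have [w [yw p1w wx]] : exists w, [/\ y < w, p.1 <= w & w < x].
    case: (leP y p.1) => yp.
    + have [w /andP[a b]] := I_dense _ _ p1x'; exists w; split => //; [exact: le_lt_trans yp a | exact: ltW].
    + have [w /andP[a b]] := I_dense _ _ yx; exists w; split => //; exact: ltW (lt_trans yp a).
  apply: (gap w yw wx); exists p => //; split => //.
  move: xj; rewrite /oleq; case: p.2 => // j xj; exact: le_trans (ltW wx) xj.
have rE : forall x, Lr A x -> x \in EL L.
  move=> x /(Lr_ext _ _ HL) [[p pL [p1x xj]] [y [xy gap]]].
  move: xj; rewrite /oleq; case e: p.2 => [j|] xj.
  - case: (eqVneq j x) => [<-|ne]; first exact: EL2 pL e.
    have xj' : x < j by rewrite lt_neqAle eq_sym ne xj.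
    exfalso.
    have [w [xw wy wj]] : exists w, [/\ x < w, w < y & w <= j].
      case: (leP y j) => yj.
      + have [w /andP[a b]] := I_dense _ _ xy; exists w; split => //; exact: ltW (lt_le_trans b yj).
      + have [w /andP[a b]] := I_dense _ _ xj'; exists w; split => //; [exact: lt_trans b yj | exact: ltW].
    apply: (gap w xw wy); exists p => //; split; first exact: le_trans p1x (ltW xw).
    by rewrite /oleq e.
  - exfalso; have [w /andP[a b]] := I_dense _ _ xy.
    apply: (gap w a b); exists p => //; split; first exact: le_trans p1x (ltW a).
    by rewrite /oleq e.
exists (seq_fset tt [seq x <- EL L | dec (Ll z A x)]).
exists (seq_fset tt [seq x <- EL L | dec (Lr A x)]).
split=> x; rewrite seq_fsetE mem_filter; split.
- by case/andP => /decP.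
- by move=> H; rewrite (lE _ H) andbT; apply/decP.
- by case/andP => /decP.
- by move=> H; rewrite (rE _ H) andbT; apply/decP.
Qed.
End Main.
End S.

Definition memb kx ky p := PEx 1 (PAnd (PIn 1 kx) (PAnd (PLe 1 p)
  (PAll 2 (PImp (PIn 2 ky) (PNot (PAnd (PLe 1 2) (PLt 2 p))))))).
Definition PIff f g := PAnd (PImp f g) (PImp g f).
Definition fLl kx ky := PAnd (memb kx ky 0) (POr (PZ 0) (PEx 3 (PAnd (PLt 3 0)
  (PAll 4 (PImp (PLt 3 4) (PImp (PLt 4 0) (PNot (memb kx ky 4)))))))).
Definition fLr kx ky := PAnd (memb kx ky 0) (PEx 3 (PAnd (PLt 0 3)
  (PAll 4 (PImp (PLt 0 4) (PImp (PLt 4 3) (PNot (memb kx ky 4))))))).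
Definition fLmin kx ky := PAnd (memb kx ky 0) (PAll 3 (PImp (memb kx ky 3) (PLe 0 3))).
Definition fLmax kx ky := PAnd (memb kx ky 0) (PAll 3 (PImp (memb kx ky 3) (PLe 3 0))).
Definition top1 g := PAll 0 (PIff g (memb 2 3 0)).
Definition top2 g := PAll 0 (PIff g (memb 4 5 0)).
Definition topc g := PAll 0 (PIff g (memb 0 1 0)).
Definition phiD := PAnd (PAll 0 (PIff (PIn 0 0) (fLl 0 1))) (PAll 0 (PIff (PIn 0 1) (fLr 0 1))).
Definition phiEq := top1 (memb 0 1 0).
Definition phiU := top2 (POr (memb 0 1 0) (memb 2 3 0)).
Definition phiI := top2 (PAnd (memb 0 1 0) (memb 2 3 0)).
Definition phiB := topc (PNot (PEq 0 0)).
Definition phiZ := topc (PZ 0).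

Section Final.
Context {d : Order.disp_t} {I : orderType d} (z : I).
Hypothesis z_least : forall x : I, z <= x.
Hypothesis I_dense : forall x y : I, x < y -> exists w, x < w < y.

Lemma top_sem (Sl : seq {fset I}) f : wf (fun _ => false) f ->
  (wholds z (env_of Sl) (compile f) <-> psem z (env_of Sl) (fun _ => z) f).
Proof. move=> H; exact: (compileP z (env_of Sl) f (fun _ => false) (env_of Sl) (fun _ => z) H). Qed.

Let mc := memb_correct' z z_least I_dense.

Lemma fun1_gen (F : (I -> Prop) -> I -> Prop)
  (Fext : forall A B, seteq A B -> seteq (F A) (F B)) A C XA YA XC YC :
  LI A -> LI C -> coord z A XA YA -> coord z C XC YC ->
  ((forall x, F (membS XA YA) x <-> membS XC YC x) <-> seteq (F A) C).
Proof.
move=> LA LC cA cC.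
have HA := mc _ _ _ LA cA; have HC := mc _ _ _ LC cC; have HF := Fext _ _ HA.
split=> H x; split.
- by move/HF/H/HC.
- by move/HC/H/HF.
- by move/HF/H/HC.
- by move/HC/H/HF.
Qed.

Lemma fun2_gen (F : (I -> Prop) -> (I -> Prop) -> I -> Prop)
  (Fext : forall A B A' B', seteq A A' -> seteq B B' -> seteq (F A B) (F A' B'))
  A B C XA YA XB YB XC YC :
  LI A -> LI B -> LI C -> coord z A XA YA -> coord z B XB YB -> coord z C XC YC ->
  ((forall x, F (membS XA YA) (membS XB YB) x <-> membS XC YC x) <-> seteq (F A B) C).
Proof.
move=> LA LB LC cA cB cC.
have HA := mc _ _ _ LA cA; have HB := mc _ _ _ LB cB; have HC := mc _ _ _ LC cC; have HF := Fext _ _ _ _ HA HB.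
split=> H x; split.
- by move/HF/H/HC.
- by move/HC/H/HF.
- by move/HF/H/HC.
- by move/HC/H/HF.
Qed.

Lemma Lunion_ext (A B A' B' : I -> Prop) : seteq A A' -> seteq B B' -> seteq (Lunion A B) (Lunion A' B').
Proof. move=> H1 H2 x; rewrite /Lunion; split; case=> [/H1|/H2]; auto. Qed.
Lemma Linter_ext (A B A' B' : I -> Prop) : seteq A A' -> seteq B B' -> seteq (Linter A B) (Linter A' B').
Proof. move=> H1 H2 x; rewrite /Linter; split; case=> /H1 ? /H2 ?; auto. Qed.

Lemma main_interp : interpretation_L_in_W_via_lr z.
Proof.
split; first by move=> A LA; exact: coord_ex z z_least I_dense A LA.
exists (compile phiD), (compile phiEq), (compile phiU), (compile phiI), (compile phiB),
  (compile phiZ), (compile (top1 (fLmin 0 1))), (compile (top1 (fLmax 0 1))),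
  (compile (top1 (fLl 0 1))), (compile (top1 (fLr 0 1))).
split; [|split; [|split; [|split; [|split; [|split; [|split; [|split; [|split]]]]]]]].
- move=> X Y; rewrite top_sem //.
  change (coord z (membS X Y) X Y <-> exists A, LI A /\ coord z A X Y).
  split; first by move=> H; exists (membS X Y); split => //; exact: memb_LI.
  case=> A [LA [HX HY]]; have HA := mc _ _ _ LA (conj HX HY); split => x.
  + split => [/HX/(Ll_ext z _ _ HA x)|/(Ll_ext z _ _ HA x)/HX]//.
  + split => [/HY/(Lr_ext _ _ HA x)|/(Lr_ext _ _ HA x)/HY]//.
- move=> A B XA YA XB YB LA LB cA cB; rewrite top_sem //.
  change ((forall x, membS XA YA x <-> membS XB YB x) <-> seteq A B).
  have HA := mc _ _ _ LA cA; have HB := mc _ _ _ LB cB.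
  split=> H x; split.
  + by move/HA/H/HB.
  + by move/HB/H/HA.
  + by move/HA/H/HB.
  + by move/HB/H/HA.
- move=> A B C XA YA XB YB XC YC LA LB LC cA cB cC; rewrite top_sem //.
  change ((forall x, Lunion (membS XA YA) (membS XB YB) x <-> membS XC YC x) <-> seteq (Lunion A B) C).
  exact: (fun2_gen _ Lunion_ext _ _ _ _ _ _ _ _ _ LA LB LC cA cB cC).
- move=> A B C XA YA XB YB XC YC LA LB LC cA cB cC; rewrite top_sem //.
  exact: (fun2_gen _ Linter_ext _ _ _ _ _ _ _ _ _ LA LB LC cA cB cC).
- move=> C XC YC LC cC; rewrite top_sem //.
  change ((forall x, ~ x = x <-> membS XC YC x) <-> seteq Lbot C).
  have HC := mc _ _ _ LC cC.
  split=> H x; split.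
  + by [].
  + by move/HC/H => nx; exfalso; apply: nx.
  + by move=> nx; exfalso; apply: nx.
  + by move/HC/H.
- move=> C XC YC LC cC; rewrite top_sem //.
  change ((forall x, Lzero z x <-> membS XC YC x) <-> seteq (Lzero z) C).
  have HC := mc _ _ _ LC cC.
  split=> H x; split.
  + by move/H/HC.
  + by move/HC/H.
  + by move/H/HC.
  + by move/HC/H.
- move=> A C XA YA XC YC LA LC cA cC; rewrite top_sem //.
  exact: (fun1_gen _ Lmin_ext _ _ _ _ _ _ LA LC cA cC).
- move=> A C XA YA XC YC LA LC cA cC; rewrite top_sem //.
  exact: (fun1_gen _ Lmax_ext _ _ _ _ _ _ LA LC cA cC).
- move=> A C XA YA XC YC LA LC cA cC; rewrite top_sem //.
  exact: (fun1_gen _ (Ll_ext z) _ _ _ _ _ _ LA LC cA cC).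
- move=> A C XA YA XC YC LA LC cA cC; rewrite top_sem //.
  exact: (fun1_gen _ Lr_ext _ _ _ _ _ _ LA LC cA cC).
Qed.
End Final.

Theorem theorem6p4 (d : Order.disp_t) (I : orderType d) (z : I)
    (z_least : forall x : I, z <= x)
    (I_dense : forall x y : I, x < y -> exists w, x < w < y)
    (I_no_right_end : forall x : I, exists y, x < y) :
  interpretation_L_in_W_via_lr z.
Proof. exact: main_interp z_least I_dense. Qed.
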